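(* Let $\mathbf w=\mathbf w^{H,\mathbf S_r}_{\mathbf b}$ be a binary subspace chirp of rank $r$ with parameters $H\in\mathcal G(m,r;2)$, $\mathbf S_r\in\mathrm{Sym}(r;2)$, $\mathbf b\in\mathbb F_2^m$. For $\mathbf x,\mathbf y\in\mathbb F_2^m$ we have $\mathbf w^\dagger\mathbf E(\mathbf x,\mathbf y)\mathbf w\neq0$ if and only if $\mathbf x\in H$ and, writing $\mathbf x=\mathbf H_{\mathcal I}\mathbf z$ with $\mathbf z\in\mathbb F_2^r$, one has $\mathbf H_{\mathcal I}^T\mathbf y=\mathbf S_r\mathbf z$; equivalently $\mathbf y\in\{\tilde{\mathbf H}_{\mathcal I}\mathbf v+\mathbf I_{\mathcal I}\mathbf S_r\mathbf z:\mathbf v\in\mathbb F_2^{m-r}\}$. In particular $\mathbf w^\dagger\mathbf E(\mathbf 0,\mathbf y)\mathbf w\neq0$ if and only if $\mathbf y$ lies in the column space of $\tilde{\mathbf H}_{\mathcal I}$, which equals $H^{\perp}=\{\mathbf y:\mathbf y^T\mathbf h=0\ \forall\mathbf h\in H\}$.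
   Context: Fix $m\ge1$, $N=2^m$. Binary vectors are columns over $\mathbb F_2$; $\mathrm{Sym}(r;2)$ is the set of symmetric binary $r\times r$ matrices, $\mathcal G(m,r;2)$ the set of $r$-dimensional subspaces of $\mathbb F_2^m$. The standard basis of $\mathbb C^N=(\mathbb C^2)^{\otimes m}$ is $\{\mathbf e_{\mathbf v}=\mathbf e_{v_1}\otimes\cdots\otimes\mathbf e_{v_m}:\mathbf v\in\mathbb F_2^m\}$ and vectors of $\mathbb C^N$ are indexed by $\mathbb F_2^m$; $\dagger$ is conjugate transpose. Whenever a binary expression appears in an exponent of $i$, binary entries are lifted to the integers $0,1$ and the expression is evaluated in $\mathbb Z$ (equivalently mod 4). Pauli matrices: $\sigma_x=\begin{pmatrix}0&1\\1&0\end{pmatrix}$, $\sigma_z=\begin{pmatrix}1&0\\0&-1\end{pmatrix}$; for $\mathbf a,\mathbf b\in\mathbb F_2^m$, $\mathbf D(\mathbf a,\mathbf b)=\sigma_x^{a_1}\sigma_z^{b_1}\otimes\cdots\otimes\sigma_x^{a_m}\sigma_z^{b_m}$ and $\mathbf E(\mathbf a,\mathbf b)=i^{\mathbf a^T\mathbf b}\mathbf D(\mathbf a,\mathbf b)$. Echelon data: for $0\le r\le m$ and $H\in\mathcal G(m,r;2)$, let $\mathbf H_{\mathcal I}$ be the unique $m\times r$ binary matrix in column reduced echelon form with column space $H$: there are indices $i_1<\dots<i_r$, $\mathcal I=\{i_1,\dots,i_r\}$, such that rows $i_1,\dots,i_r$ of $\mathbf H_{\mathcal I}$ form $\mathbf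 I_r$ and column $j$ of $\mathbf H_{\mathcal I}$ is zero in all rows above row $i_j$. Let $\mathbf I_{\mathcal I}$ (resp. $\mathbf I_{\tilde{\mathcal I}}$) be the $m\times r$ (resp. $m\times(m-r)$) matrix whose columns are the standard basis vectors $\mathbf e_i$ with $i\in\mathcal I$ (resp. $i\notin\mathcal I$), in increasing order of $i$. Put $\mathbf P_{\mathcal I}=[\mathbf H_{\mathcal I}\ \ \mathbf I_{\tilde{\mathcal I}}]\in\mathrm{GL}(m;2)$, and define the $m\times(m-r)$ matrix $\tilde{\mathbf H}_{\mathcal I}$ by $\mathbf P_{\mathcal I}^{-T}=[\mathbf I_{\mathcal I}\ \ \tilde{\mathbf H}_{\mathcal I}]$. (For $r=0$: $H=\{0\}$, $\mathbf P_{\mathcal I}=\mathbf I_m$.) For $\mathbf S_r\in\mathrm{Sym}(r;2)$, $\tilde{\mathbf S}_r\in\mathrm{Sym}(m;2)$ denotes the matrix with $\mathbf S_r$ as its upper-left $r\times r$ block and zeros elsewhere. Binary subspace chirps: let $f(\mathbf v,\mathbf w,r)=\prod_{i=r+1}^m(1+v_i+w_i)$ computed in $\mathbb F_2$ and viewed in $\{0,1\}$ (so $f=1$ iff $\mathbf v,\mathbf w$ agree in their last $m-r$ coordinates). For $\mathbf b\in\mathbb F_2^m$, the binary subspace chirp (BSSC) $\mathbf w_{\mathbf b}=\mathbf w^{H,\mathbf S_r}_{\mathbf b}\in\mathbb C^N$ has entries $\mathbf w_{\mathbf b}(\mathbf a)=2^{-r/2}\,i^{\mathbf u^T\tilde{\mathbf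 S}_r\mathbf u+2\mathbf b^T\mathbf u}\,f(\mathbf b,\mathbf u,r)$ with $\mathbf u=\mathbf P_{\mathcal I}^{-1}\mathbf a\in\mathbb F_2^m$, for $\mathbf a\in\mathbb F_2^m$. The integer $r$ is its rank. *)

(* Defs.v *)
From HB Require Import structures.
From mathcomp Require Import all_boot all_order all_algebra all_field.
Set Implicit Arguments. Unset Strict Implicit. Unset Printing Implicit Defensive.
Import Order.TTheory GRing.Theory Num.Theory.
Local Open Scope ring_scope.

Definition lift2 (x : 'F_2) : nat := nat_of_ord x.

Definition idx2 (x : 'F_2) : 'I_2 := inord (nat_of_ord x).

Definition sigma_x : 'M[algC]_2 := \matrix_(i < 2, j < 2) (i != j)%:R.
Definition sigma_z : 'M[algC]_2 :=
  \matrix_(i < 2, j < 2) (if i == j then (if nat_of_ord i == 0%N then 1 else -1) else 0).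

(* vectors of C^N, N = 2^m, indexed by F_2^m; operators as kernels *)
Definition cvec (m : nat) := 'cV['F_2]_m -> algC.
Definition cop (m : nat) := 'cV['F_2]_m -> 'cV['F_2]_m -> algC.

(* D(a,b) = tensor product of sigma_x^{a_i} sigma_z^{b_i}; the entry at
   (e_u, e_v) of a tensor product is the product of the factor entries *)
Definition Dop (m : nat) (a b : 'cV['F_2]_m) : cop m :=
  fun u v => \prod_(i < m)
     ((sigma_x ^+ lift2 (a i ord0) *m sigma_z ^+ lift2 (b i ord0))
        (idx2 (u i ord0)) (idx2 (v i ord0))).

Definition zdot (m : nat) (a b : 'cV['F_2]_m) : nat :=
  (\sum_(i < m) lift2 (a i ord0) * lift2 (b i ord0))%N.

Definition Eop (m : nat) (a b : 'cV['F_2]_m) : cop m :=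
  fun u v => 'i ^+ zdot a b * Dop a b u v.

Definition quadf (m : nat) (w : cvec m) (A : cop m) : algC :=
  \sum_(u : 'cV['F_2]_m) \sum_(v : 'cV['F_2]_m) (w u)^* * A u v * w v.

Definition col_reduced_echelon (m r : nat) (HI : 'M['F_2]_(m, r))
    (piv : 'I_r -> 'I_m) : Prop :=
  [/\ forall j k : 'I_r, (j < k)%N -> (piv j < piv k)%N,
      forall k j : 'I_r, HI (piv k) j = (k == j)%:R
    & forall (i : 'I_m) (j : 'I_r), (i < piv j)%N -> HI i j = 0].

Definition colspace (m r : nat) (M : 'M['F_2]_(m, r)) : {set 'cV['F_2]_m} :=
  [set M *m z | z : 'cV['F_2]_r].

(* indices not in I, in increasing order *)
Definition compl_idx (m r : nat) (piv : 'I_r -> 'I_m) : seq 'I_m :=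
  enum [set i : 'I_m | i \notin [seq piv j | j : 'I_r]].

Definition I_I (m r : nat) (piv : 'I_r -> 'I_m) : 'M['F_2]_(m, r) :=
  \matrix_(i < m, j < r) (i == piv j)%:R.

(* I_{~I} : columns e_i, i notin I, increasing; the default of nth is never used *)
Definition I_Ic (m r : nat) (piv : 'I_r -> 'I_m) : 'M['F_2]_(m, m - r) :=
  \matrix_(i < m, k < m - r) (i == nth i (compl_idx piv) k)%:R.

(* P_I = [H_I  I_{~I}] *)
Definition P_I (m r : nat) (HI : 'M['F_2]_(m, r)) (piv : 'I_r -> 'I_m)
  : 'M['F_2]_m :=
  \matrix_(i < m, j < m)
    match @insub _ (fun n => (n < r)%N) 'I_r (nat_of_ord j) with
    | Some j' => HI i j'
    | None =>
      match @insub _ (fun n => (n < m - r)%N) 'I_(m - r) (nat_of_ord j - r)%N with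
      | Some k => I_Ic piv i k
      | None => 0
      end
    end.

(* ~H_I = last m - r columns of P_I^{-T} *)
Definition Htil (m r : nat) (HI : 'M['F_2]_(m, r)) (piv : 'I_r -> 'I_m)
  : 'M['F_2]_(m, m - r) :=
  \matrix_(i < m, k < m - r)
    match @insub _ (fun n => (n < m)%N) 'I_m (r + nat_of_ord k)%N with
    | Some j => (invmx (P_I HI piv))^T i j
    | None => 0
    end.

(* ~S_r : S_r in the upper-left block, zeros elsewhere *)
Definition Stil (m r : nat) (S : 'M['F_2]_r) : 'M['F_2]_m :=
  \matrix_(i < m, j < m)
    match @insub _ (fun n => (n < r)%N) 'I_r (nat_of_ord i),
          @insub _ (fun n => (n < r)%N) 'I_r (nat_of_ord j) with
    | Some i', Some j' => S i' j'
    | _, _ => 0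
    end.

(* f(v,w,r) = prod_{i=r+1}^m (1 + v_i + w_i) in F_2 (1-based indices) *)
Definition fagree (m : nat) (v w : 'cV['F_2]_m) (r : nat) : 'F_2 :=
  \prod_(i < m | (r <= i)%N) (1 + v i ord0 + w i ord0).

Definition zquad (m : nat) (M : 'M['F_2]_m) (u : 'cV['F_2]_m) : nat :=
  (\sum_(i < m) \sum_(j < m) lift2 (u i ord0) * lift2 (M i j) * lift2 (u j ord0))%N.

Definition bssc (m r : nat) (HI : 'M['F_2]_(m, r)) (piv : 'I_r -> 'I_m)
    (S : 'M['F_2]_r) (b : 'cV['F_2]_m) : cvec m :=
  fun a =>
    let u := invmx (P_I HI piv) *m a in
    (sqrtC 2) ^- r * 'i ^+ (zquad (Stil m S) u + 2 * zdot b u)%N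
      * (lift2 (fagree b u r))%:R.

Definition perp (m : nat) (H : {set 'cV['F_2]_m}) : {set 'cV['F_2]_m} :=
  [set y | [forall h in H, (y^T *m h) ord0 ord0 == 0]].

(* Main.v *)
Require Import Defs.
From HB Require Import structures.
From mathcomp Require Import all_boot all_order all_algebra all_field.
From mathcomp Require Import ring zify.
Import Order.TTheory GRing.Theory Num.Theory.
Local Open Scope ring_scope.

Lemma F2cases (x : 'F_2) : x = 0 \/ x = 1.
Proof. case: x => [[|[|n]] Hn]; [left|right|]; try exact: val_inj. by []. Qed.

Lemma F2_neq0 (x : 'F_2) : x != 0 -> x = 1.
Proof. by case: (F2cases x) => ->; rewrite ?eqxx. Qed.

Lemma F2_opp (x : 'F_2) : - x = x.
Proof. by case: (F2cases x) => ->; apply: val_inj. Qed.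

Lemma F2_addr_eq0 (x y : 'F_2) : (x + y == 0) = (x == y).
Proof. by case: (F2cases x) => ->; case: (F2cases y) => ->. Qed.

Definition sg (x : 'F_2) : algC := (-1) ^+ lift2 x.

Lemma lift2_0 : lift2 0 = 0%N. Proof. by []. Qed.
Lemma lift2_1 : lift2 1 = 1%N. Proof. by []. Qed.

Lemma sg0 : sg 0 = 1. Proof. by []. Qed.
Lemma sg1 : sg 1 = -1. Proof. by rewrite /sg expr1. Qed.

Lemma sgD (x y : 'F_2) : sg (x + y) = sg x * sg y.
Proof.
case: (F2cases x) => ->; case: (F2cases y) => ->;
  rewrite ?add0r ?addr0 ?sg0 ?sg1 ?mul1r ?mulr1 //.
have -> : (1 + 1 : 'F_2) = 0 by apply: val_inj.
by rewrite sg0 mulrNN mulr1.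
Qed.

Lemma sg_neq0 x : sg x != 0.
Proof. by case: (F2cases x) => ->; rewrite ?sg0 ?sg1 ?oppr_eq0 oner_eq0. Qed.

Lemma sgK x : sg x * sg x = 1.
Proof. by rewrite -sgD; case: (F2cases x) => ->; [rewrite addr0|have ->: (1+1:'F_2) = 0 by apply: val_inj]. Qed.

Lemma sg_conj x : (sg x)^* = sg x.
Proof. by case: (F2cases x) => ->; rewrite ?sg0 ?sg1 ?rmorphN rmorph1. Qed.

Lemma sg_sum (I : finType) (F : I -> 'F_2) : sg (\sum_i F i) = \prod_i sg (F i).
Proof. by apply: (big_morph sg sgD). Qed.

Lemma lift2M (x y : 'F_2) : lift2 (x * y) = (lift2 x * lift2 y)%N.
Proof. by case: (F2cases x) => ->; case: (F2cases y) => ->; rewrite ?mul0r ?mulr0 ?mulr1. Qed.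

Lemma m1_exp_sum (I : finType) (F : I -> nat) :
  (-1 : algC) ^+ (\sum_i F i)%N = \prod_i (-1) ^+ F i.
Proof. by apply: (big_morph _ (exprD _)); rewrite expr0. Qed.

Lemma zdot_sg (m : nat) (a b : 'cV['F_2]_m) :
  (-1 : algC) ^+ zdot a b = sg ((a^T *m b) ord0 ord0).
Proof.
rewrite /zdot m1_exp_sum mxE sg_sum; apply: eq_bigr => i _.
by rewrite mxE /sg lift2M.
Qed.

Lemma F2_11 : (1 + 1 : 'F_2) = 0. Proof. exact: val_inj. Qed.
Lemma F2_01 : (0 == 1 :> 'F_2) = false. Proof. by []. Qed.
Lemma F2_10 : (1 == 0 :> 'F_2) = false. Proof. by []. Qed.
Lemma idx2_0 : idx2 0 = ord0. Proof. by apply: val_inj; rewrite /= inordK. Qed.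
Lemma idx2_1 : idx2 1 = lift ord0 ord0. Proof. by apply: val_inj; rewrite /= inordK. Qed.
Lemma I2_01 : (ord0 == lift ord0 ord0 :> 'I_2) = false. Proof. by []. Qed.
Lemma I2_10 : (lift ord0 ord0 == ord0 :> 'I_2) = false. Proof. by []. Qed.
Lemma I2_1v : (nat_of_ord (lift ord0 ord0 : 'I_2) == 0%N) = false. Proof. by []. Qed.

Lemma coordD (p q s t : 'F_2) :
  (sigma_x ^+ lift2 p *m sigma_z ^+ lift2 q) (idx2 s) (idx2 t)
  = (s == t + p)%:R * sg (q * t).
Proof.
case: (F2cases p) => ->; case: (F2cases q) => ->;
case: (F2cases s) => ->; case: (F2cases t) => ->;
rewrite ?lift2_0 ?lift2_1 ?expr0 ?expr1 ?mul1mx ?mulmx1 ?idx2_0 ?idx2_1 /sigma_x /sigma_z !mxE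
  ?big_ord_recl ?big_ord0 ?mxE ?(add0r, addr0, F2_11, mul0r, mulr0, mulr1, mul1r, sg0, sg1, eqxx, F2_01, F2_10, I2_01, I2_10, I2_1v) //=.
Qed.

Lemma prod_ind (m : nat) (F : 'I_m -> bool) :
  \prod_i ((F i)%:R : algC) = ([forall i, F i])%:R.
Proof.
case: (boolP [forall i, F i]) => [/forallP H|/forallPn [i Hi]].
  by apply: big1 => i _; rewrite H.
by rewrite (bigD1 i) //= (negbTE Hi) mul0r.
Qed.

Lemma Dop_eq (m : nat) (a b u v : 'cV['F_2]_m) :
  Dop a b u v = (u == v + a)%:R * sg ((b^T *m v) ord0 ord0).
Proof.
rewrite /Dop; under eq_bigr do rewrite coordD.
rewrite big_split /= prod_ind mxE sg_sum.
have -> : [forall i, u i ord0 == v i ord0 + a i ord0] = (u == v + a).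
  apply/idP/idP => [/forallP H|/eqP ->]; last by apply/forallP => i; rewrite !mxE.
  by apply/eqP/matrixP => i j; rewrite (ord1 j) !mxE; apply/eqP.
by congr (_ * _); apply: eq_bigr => i _; rewrite mxE.
Qed.

Lemma quadf_E (m : nat) (w : cvec m) (x y : 'cV['F_2]_m) :
  quadf w (Eop x y) =
  'i ^+ zdot x y * \sum_v (w (v + x))^* * sg ((y^T *m v) ord0 ord0) * w v.
Proof.
rewrite /quadf exchange_big mulr_sumr; apply: eq_bigr => v _.
rewrite (bigD1 (v + x)) //= big1 ?addr0.
  by rewrite /Eop Dop_eq eqxx mul1r; ring.
by move=> u /negbTE Hu; rewrite /Eop Dop_eq Hu !(mul0r, mulr0).
Qed.

Lemma sum_delta_r (R : nzRingType) (I : finType) (F : I -> R) (a : I) :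
  \sum_j F j * (j == a)%:R = F a.
Proof.
rewrite (bigD1 a) //= eqxx mulr1 big1 ?addr0 // => j /negbTE Hj.
by rewrite Hj mulr0.
Qed.

Lemma sum_delta_l (R : nzRingType) (I : finType) (F : I -> R) (a : I) :
  \sum_j (j == a)%:R * F j = F a.
Proof.
rewrite -[RHS](@sum_delta_r _ _ F a); apply: eq_bigr => j _.
by case: (j == a); rewrite ?mul1r ?mul0r ?mulr1 ?mulr0.
Qed.

Lemma insub_ord (n k : nat) (h : (k < n)%N) : insub k = Some (Ordinal h).
Proof.
case: insubP => [u _ Hu|]; first by congr Some; apply: val_inj.
by rewrite h.
Qed.

Lemma insub_ord_none (n k : nat) (h : (n <= k)%N) : @insub _ (fun x => (x < n)%N) 'I_n k = None.
Proof. by case: insubP => // u; rewrite ltnNge h. Qed.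


Lemma PoszS (I : finType) (F : I -> nat) : Posz (\sum_i F i)%N = \sum_i Posz (F i).
Proof. by apply: (big_morph Posz PoszD). Qed.

Section Quad.
Variables (m : nat) (M : 'M['F_2]_m).
Hypothesis hM : M^T = M.

Definition Li (x : 'F_2) : int := Posz (lift2 x).

Lemma LiD a b : Li (a + b) = Li a + Li b - 2 * (Li a * Li b).
Proof. by case: (F2cases a) => ->; case: (F2cases b) => ->; rewrite ?F2_11 ?addr0 ?add0r. Qed.

Definition Bf (f g : 'I_m -> int) : int := \sum_i \sum_j f i * Li (M i j) * g j.

Lemma Bf_ext f f' g g' : (forall i, f i = f' i) -> (forall i, g i = g' i) -> Bf f g = Bf f' g'.
Proof. by move=> Hf Hg; apply: eq_bigr => i _; apply: eq_bigr => j _; rewrite Hf Hg. Qed.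

Lemma BfDl f1 f2 g : Bf (fun i => f1 i + f2 i) g = Bf f1 g + Bf f2 g.
Proof. rewrite /Bf -big_split; apply: eq_bigr => i _; rewrite -big_split; apply: eq_bigr => j _ /=; ring. Qed.

Lemma BfZl c f g : Bf (fun i => c * f i) g = c * Bf f g.
Proof. rewrite /Bf mulr_sumr; apply: eq_bigr => i _; rewrite mulr_sumr; apply: eq_bigr => j _ /=; ring. Qed.

Lemma Bf_sym f g : Bf f g = Bf g f.
Proof.
rewrite /Bf exchange_big; apply: eq_bigr => i _; apply: eq_bigr => j _ /=.
have -> : M j i = M i j by rewrite -[in LHS]hM mxE.
ring.
Qed.

Lemma BfDr f g1 g2 : Bf f (fun i => g1 i + g2 i) = Bf f g1 + Bf f g2.
Proof. by rewrite Bf_sym BfDl !(Bf_sym f). Qed.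

Lemma BfZr c f g : Bf f (fun i => c * g i) = c * Bf f g.
Proof. by rewrite Bf_sym BfZl Bf_sym. Qed.

Lemma natBf (f g : 'I_m -> nat) :
  Posz (\sum_i \sum_j f i * lift2 (M i j) * g j)%N = Bf (fun i => Posz (f i)) (fun i => Posz (g i)).
Proof. rewrite PoszS; apply: eq_bigr => i _; rewrite PoszS; apply: eq_bigr => j _. by rewrite !PoszM. Qed.

Lemma zquad_add (u t : 'cV['F_2]_m) :
  (zquad M (u + t) + (\sum_i \sum_j (lift2 (u i ord0) * lift2 (t i ord0)) * lift2 (M i j) * (lift2 (u j ord0) + lift2 (t j ord0))) * 4)%N
  = (zquad M u + zquad M t + (\sum_i \sum_j lift2 (u i ord0) * lift2 (M i j) * lift2 (t j ord0)) * 2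
     + (\sum_i \sum_j (lift2 (u i ord0) * lift2 (t i ord0)) * lift2 (M i j) * (lift2 (u j ord0) * lift2 (t j ord0))) * 4)%N.
Proof.
apply/eqP; rewrite -eqz_nat; apply/eqP.
rewrite !PoszD !PoszM /zquad !natBf.
set U := fun i => Li (u i ord0); set T := fun i => Li (t i ord0).
have hW : forall i, Posz (lift2 ((u + t) i ord0)) = (U i + T i) + (-2) * (U i * T i).
  by move=> i; rewrite mxE -[Posz (lift2 _)]/(Li _) LiD /U /T; ring.
have hC : forall i, Posz (lift2 (u i ord0) * lift2 (t i ord0)) = U i * T i.
  by move=> i; rewrite PoszM.
have hA : forall i, Posz (lift2 (u i ord0) + lift2 (t i ord0)) = U i + T i.
  by move=> i; rewrite PoszD.
rewrite (Bf_ext _ _ _ _ hW hW) (Bf_ext _ _ _ _ hC hA) (Bf_ext _ _ _ _ hC hC).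
rewrite -/(Bf U U) -/(Bf T T) -/(Bf U T).
rewrite !(BfDl, BfDr, BfZl, BfZr).
rewrite (Bf_sym T U) (Bf_sym U (fun i => U i * T i)) (Bf_sym T (fun i => U i * T i)).
ring.
Qed.
End Quad.

Lemma i4 : 'i ^+ 4 = 1 :> algC.
Proof. by rewrite (_ : 4 = 2 * 2)%N // exprM sqrCi sqrrN expr1n. Qed.

Lemma iK4 (k : nat) : 'i ^+ (k * 4) = 1 :> algC.
Proof. by rewrite mulnC exprM i4 expr1n. Qed.

Lemma ipow_quad (m : nat) (M : 'M['F_2]_m) (hM : M^T = M) (u t : 'cV['F_2]_m) :
  'i ^+ zquad M (u + t) = 'i ^+ zquad M u * 'i ^+ zquad M t * sg ((u^T *m M *m t) ord0 ord0).
Proof.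
have E := congr1 (fun n => 'i ^+ n : algC) (@zquad_add _ _ hM u t); move: E => /=.
rewrite !exprD !iK4 !mulr1 => ->.
congr (_ * _); rewrite mulnC exprM sqrCi m1_exp_sum.
rewrite mxE sg_sum.
under [RHS]eq_bigr do rewrite mxE mulr_suml sg_sum.
rewrite exchange_big; apply: eq_bigr => i _; rewrite m1_exp_sum; apply: eq_bigr => j _.
by rewrite /sg !lift2M mxE.
Qed.

Definition agr {m : nat} (r : nat) (b u : 'cV['F_2]_m) : bool :=
  [forall i : 'I_m, (r <= i)%N ==> (u i ord0 == b i ord0)].

Lemma uTg_sum (m : nat) (u g : 'cV['F_2]_m) :
  (u^T *m g) ord0 ord0 = \sum_k u k ord0 * g k ord0.
Proof. by rewrite mxE; apply: eq_bigr => k _; rewrite mxE. Qed.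

Lemma chsum (m r : nat) (b g : 'cV['F_2]_m) :
  (\sum_u ((agr r b u)%:R : algC) * sg ((u^T *m g) ord0 ord0) != 0) <->
  (forall i : 'I_m, (i < r)%N -> g i ord0 = 0).
Proof.
split.
  move=> Hs i hi; apply/eqP; apply: contraNT Hs => Hg.
  have g1 : g i ord0 = 1 by apply: F2_neq0.
  set e : 'cV['F_2]_m := delta_mx i ord0.
  set F := fun u : 'cV['F_2]_m => ((agr r b u)%:R : algC) * sg ((u^T *m g) ord0 ord0).
  have HF : forall u, F (u + e) = - F u.
    move=> u; rewrite /F.
    have -> : agr r b (u + e) = agr r b u.
      apply: eq_forallb => j; case: (leqP r j) => //= hj.
      rewrite !mxE (_ : (j == i) = false) ?addr0 //.
      by apply/negbTE; rewrite neq_ltn (leq_trans hi hj) orbT.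
    rewrite raddfD mulmxDl mxE sgD.
    have -> : (e^T *m g) ord0 ord0 = 1.
      rewrite uTg_sum (bigD1 i) //= big1 ?addr0; first by rewrite !mxE !eqxx mul1r.
      by move=> k /negbTE hk; rewrite !mxE hk mul0r.
    by rewrite sg1 mulrN1 mulrN.
  have H2 : \sum_u F u = - \sum_u F u.
    rewrite {1}(reindex_inj (addIr e)) /= -sumrN; apply: eq_bigr => u _; exact: HF.
  apply/eqP; move: H2 => /eqP; rewrite -addr_eq0 -mulr2n -mulr_natr mulf_eq0.
  by rewrite pnatr_eq0 orbF => /eqP.
move=> Hg.
have -> : \sum_u ((agr r b u)%:R : algC) * sg ((u^T *m g) ord0 ord0)
        = \sum_u ((agr r b u)%:R : algC) * sg ((b^T *m g) ord0 ord0).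
  apply: eq_bigr => u _; case: (boolP (agr r b u)) => [Hu|]; last by rewrite !mul0r.
  move: Hu; rewrite /agr => /forallP Hu.
  congr (_ * sg _); rewrite !uTg_sum; apply: eq_bigr => k _.
  case: (ltnP k r) => hk; first by rewrite Hg // !mulr0.
  by have := Hu k; rewrite hk /= => /eqP ->.
rewrite -mulr_suml mulf_neq0 ?sg_neq0 // -natr_sum pnatr_eq0 -lt0n.
have hb : agr r b b by rewrite /agr; apply/forallP => i; rewrite eqxx implybT.
by rewrite (bigD1 b) //= hb.
Qed.

Lemma ring_aux (cb c ab a atb s1 sb st ag s2 : algC) :
  ab * a = 1 -> sb * sb = 1 -> ag * ag = ag ->
  cb * (ab * atb * s1) * (sb * st) * ag * s2 * (c * a * sb * ag)
  = cb * c * atb * st * (ag * (s1 * s2)).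
Proof. move=> H1 H2 H3; ring: H1 H2 H3. Qed.

Section LinAlg.
Variables (m r : nat) (HI : 'M['F_2]_(m, r)) (piv : 'I_r -> 'I_m).
Hypothesis hpiv : forall k j : 'I_r, HI (piv k) j = (k == j)%:R.

Lemma piv_inj : injective piv.
Proof.
move=> k k' E; apply/eqP; rewrite eq_sym; apply/negPn/negP => Hne.
have := hpiv k k; rewrite E hpiv (negbTE Hne) eqxx.
by move/(congr1 val).
Qed.

Lemma hrm : (r <= m)%N.
Proof. by have := leq_card _ piv_inj; rewrite !card_ord. Qed.

Definition colL (j : 'I_r) : 'I_m := widen_ord hrm j.
Lemma colR_proof (l : 'I_(m - r)) : (r + l < m)%N.
Proof. by rewrite -ltn_subRL. Qed.
Definition colR (l : 'I_(m - r)) : 'I_m := Ordinal (colR_proof l).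

Lemma colL_eq a b : (colL a == colL b) = (a == b).
Proof. by []. Qed.
Lemma colR_eq a b : (colR a == colR b) = (a == b).
Proof. by rewrite /colR /eq_op /= eqn_add2l. Qed.
Lemma colLR a b : (colL a == colR b) = false.
Proof. by rewrite /colL /colR /eq_op /=; apply/negbTE; rewrite neq_ltn ltn_addr. Qed.
Lemma colRL a b : (colR b == colL a) = false.
Proof. by rewrite eq_sym colLR. Qed.

Lemma ordP (k : 'I_m) : {j | k = colL j} + {l | k = colR l}.
Proof.
case: (ltnP k r) => hk.
  by left; exists (Ordinal hk); apply: val_inj.
have hl : (k - r < m - r)%N by have := ltn_ord k; lia.
by right; exists (Ordinal hl); apply: val_inj => /=; lia.
Qed.

Lemma sum_split (V : zmodType) (F : 'I_m -> V) :
  \sum_k F k = \sum_j F (colL j) + \sum_l F (colR l).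
Proof.
have e : (r + (m - r) = m)%N by rewrite subnKC ?hrm.
have gen : forall n k (e : (r + k = n)%N) (G : 'I_n -> V),
  \sum_i G i = \sum_(j < r) G (cast_ord e (lshift k j)) + \sum_(l < k) G (cast_ord e (rshift r l)).
  move=> n k e' G; subst n; rewrite big_split_ord.
  by congr (_ + _); apply: eq_bigr => i _; rewrite cast_ord_id.
rewrite (gen _ _ e); congr (_ + _); apply: eq_bigr => i _; congr F; exact: val_inj.
Qed.

Definition E1 : 'M['F_2]_(m, r) := \matrix_(i, j) (i == colL j)%:R.
Definition E2 : 'M['F_2]_(m, m - r) := \matrix_(i, j) (i == colR j)%:R.

Lemma E1tE1 : E1^T *m E1 = 1%:M.
Proof.
apply/matrixP => a b; rewrite !mxE.
under eq_bigr do rewrite !mxE.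
by rewrite sum_delta_l colL_eq.
Qed.

Lemma E2tE2 : E2^T *m E2 = 1%:M.
Proof.
apply/matrixP => a b; rewrite !mxE.
under eq_bigr do rewrite !mxE.
by rewrite sum_delta_l colR_eq.
Qed.

Lemma E1tE2 : E1^T *m E2 = 0.
Proof.
apply/matrixP => a b; rewrite !mxE.
under eq_bigr do rewrite !mxE.
by rewrite sum_delta_l colLR.
Qed.

Lemma E1E1_E2E2 : E1 *m E1^T + E2 *m E2^T = 1%:M.
Proof.
apply/matrixP => a b; rewrite !mxE.
under eq_bigr do rewrite !mxE.
under [X in _ + X = _]eq_bigr do rewrite !mxE.
case: (ordP a) => [[j ->]|[l ->]].
  rewrite (eq_bigr (fun j' => (j' == j)%:R * (b == colL j')%:R)); last by move=> j' _; rewrite colL_eq eq_sym.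
  rewrite sum_delta_l big1 ?addr0; last by move=> l _; rewrite colLR mul0r.
  by rewrite eq_sym.
rewrite big1 ?add0r; last by move=> j _; rewrite colRL mul0r.
rewrite (eq_bigr (fun l' => (l' == l)%:R * (b == colR l')%:R)); last by move=> l' _; rewrite colR_eq eq_sym.
by rewrite sum_delta_l eq_sym.
Qed.

Definition P := P_I HI piv.

Lemma PL i j : P i (colL j) = HI i j.
Proof. by rewrite /P /P_I mxE (@insub_ord _ _ (ltn_ord j)); congr (HI i _); apply: val_inj. Qed.

Lemma PR i l : P i (colR l) = I_Ic piv i l.
Proof.
rewrite /P /P_I mxE /= insub_ord_none ?leq_addr //.
have h : (r + l - r < m - r)%N by rewrite addKn.
by rewrite (@insub_ord _ _ h); congr (I_Ic piv i _); apply: val_inj => /=; rewrite addKn.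
Qed.

Lemma PE1 : P *m E1 = HI.
Proof.
apply/matrixP => i j; rewrite mxE.
under eq_bigr do rewrite [E1 _ _]mxE.
by rewrite sum_delta_r PL.
Qed.

Lemma PE2 : P *m E2 = I_Ic piv.
Proof.
apply/matrixP => i j; rewrite mxE.
under eq_bigr do rewrite [E2 _ _]mxE.
by rewrite sum_delta_r PR.
Qed.

Lemma P_decomp : P = HI *m E1^T + I_Ic piv *m E2^T.
Proof.
by rewrite -PE1 -PE2 -!mulmxA -mulmxDr E1E1_E2E2 mulmx1.
Qed.

Definition cmp := compl_idx piv.
Lemma size_cmp : size cmp = (m - r)%N.
Proof.
rewrite /cmp /compl_idx -cardE.
set s := [seq piv j | j : 'I_r].
have e1 : [set i : 'I_m | i \notin s] = ~: [set i | i \in s] by apply/setP => i; rewrite !inE.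
have e2 : #|[set i : 'I_m | i \in s]| = r by rewrite cardsE card_image ?card_ord //; exact: piv_inj.
have := cardsC [set i : 'I_m | i \in s]; rewrite -e1 e2 card_ord; lia.
Qed.

Definition cl (l : 'I_(m - r)) : 'I_m := nth (colR l) cmp l.
Lemma cl_lt (l : 'I_(m - r)) : (l < size cmp)%N.
Proof. by rewrite size_cmp. Qed.

Lemma piv_cl j l : (piv j == cl l) = false.
Proof.
apply/negbTE/eqP => E.
have := mem_nth (colR l) (cl_lt l); rewrite -/(cl l) -E /cmp /compl_idx mem_enum inE.
by rewrite map_f ?mem_enum.
Qed.

Lemma I_IcE i l : I_Ic piv i l = (i == cl l)%:R.
Proof. by rewrite mxE /cl (set_nth_default (colR l) i (cl_lt l)). Qed.

Lemma cl_eq l l' : (cl l == cl l') = (l == l').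
Proof.
rewrite /cl (set_nth_default (colR l) (colR l') (cl_lt l')).
by rewrite nth_uniq ?cl_lt ?enum_uniq.
Qed.

Lemma IIt_HI : (I_I piv)^T *m HI = 1%:M.
Proof.
apply/matrixP => a b; rewrite !mxE.
under eq_bigr do rewrite !mxE.
by rewrite sum_delta_l hpiv.
Qed.

Lemma IIt_Ic : (I_I piv)^T *m I_Ic piv = 0.
Proof.
apply/matrixP => a b; rewrite !mxE.
under eq_bigr do rewrite [(I_I piv)^T _ _]mxE [I_I piv _ _]mxE.
by rewrite sum_delta_l I_IcE piv_cl.
Qed.

Lemma Ict_Ic : (I_Ic piv)^T *m I_Ic piv = 1%:M.
Proof.
apply/matrixP => a b; rewrite [RHS]mxE mxE.
under eq_bigr do rewrite [(I_Ic piv)^T _ _]mxE !I_IcE.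
by rewrite sum_delta_l cl_eq.
Qed.

Lemma Pt_II : P^T *m I_I piv = E1.
Proof.
apply/matrixP => k j; rewrite mxE [RHS]mxE.
under eq_bigr do rewrite [P^T _ _]mxE [I_I piv _ _]mxE.
rewrite sum_delta_r.
case: (ordP k) => [[j' ->]|[l ->]].
  by rewrite PL hpiv colL_eq eq_sym.
by rewrite PR I_IcE piv_cl colRL.
Qed.

Definition Xm := (I_Ic piv)^T *m (1%:M - HI *m (I_I piv)^T).
Definition Qm := E1 *m (I_I piv)^T + E2 *m Xm.

Lemma Xm_HI : Xm *m HI = 0.
Proof. by rewrite /Xm -mulmxA mulmxBl mul1mx -mulmxA IIt_HI mulmx1 subrr mulmx0. Qed.

Lemma Xm_Ic : Xm *m I_Ic piv = 1%:M.
Proof. by rewrite /Xm -mulmxA mulmxBl mul1mx -mulmxA IIt_Ic mulmx0 subr0 Ict_Ic. Qed.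

Lemma QmP : Qm *m P = 1%:M.
Proof.
have h1 : (I_I piv)^T *m P = E1^T.
  by rewrite {1}P_decomp mulmxDr !mulmxA IIt_HI IIt_Ic mul1mx mul0mx addr0.
have h2 : Xm *m P = E2^T.
  by rewrite {1}P_decomp mulmxDr !mulmxA Xm_HI Xm_Ic mul1mx mul0mx add0r.
by rewrite /Qm mulmxDl -[E1 *m _ *m P]mulmxA -[E2 *m Xm *m P]mulmxA h1 h2 E1E1_E2E2.
Qed.

Lemma P_unit : P \in unitmx.
Proof. by case: (mulmx1_unit QmP). Qed.

Definition Qi := invmx P.
Definition Rm := Qi^T.

Lemma QiP : Qi *m P = 1%:M. Proof. exact: mulVmx P_unit. Qed.
Lemma PQi : P *m Qi = 1%:M. Proof. exact: mulmxV P_unit. Qed.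
Lemma PtR : P^T *m Rm = 1%:M. Proof. by rewrite /Rm -trmx_mul QiP trmx1. Qed.
Lemma RPt : Rm *m P^T = 1%:M. Proof. by rewrite /Rm -trmx_mul PQi trmx1. Qed.

Lemma RE1 : Rm *m E1 = I_I piv.
Proof. by rewrite -Pt_II mulmxA RPt mul1mx. Qed.

Lemma HtilE : Htil HI piv = Rm *m E2.
Proof.
apply/matrixP => i l; rewrite mxE [RHS]mxE.
under [RHS]eq_bigr do rewrite [E2 _ _]mxE.
rewrite sum_delta_r (@insub_ord _ _ (colR_proof l)).
by rewrite /Rm /Qi /P.
Qed.

Lemma HIt : HI^T = E1^T *m P^T.
Proof. by rewrite -PE1 trmx_mul. Qed.

Lemma HIt_Htil : HI^T *m Htil HI piv = 0.
Proof. by rewrite HIt HtilE mulmxA -(mulmxA _ _ Rm) PtR mulmx1 E1tE2. Qed.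

Lemma HIt_II : HI^T *m I_I piv = 1%:M.
Proof. by rewrite HIt -RE1 mulmxA -(mulmxA _ _ Rm) PtR mulmx1 E1tE1. Qed.

Lemma keyK (y : 'cV['F_2]_m) (s : 'cV['F_2]_r) :
  HI^T *m y = s <-> exists v, y = Htil HI piv *m v + I_I piv *m s.
Proof.
split=> [Hy|[v ->]].
  exists (E2^T *m (P^T *m y)).
  rewrite -Hy HIt HtilE -!mulmxA -RE1 -!mulmxA [X in _ = X]addrC -mulmxDr.
  rewrite [E1 *m (_ *m _)]mulmxA [E2 *m (_ *m _)]mulmxA -mulmxDl E1E1_E2E2 mul1mx.
  by rewrite mulmxA RPt mul1mx.
by rewrite mulmxDr !mulmxA HIt_Htil HIt_II mul0mx mul1mx add0r.
Qed.

Lemma HI_Qi (z : 'cV['F_2]_r) : Qi *m (HI *m z) = E1 *m z.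
Proof. by rewrite -PE1 !mulmxA QiP mul1mx. Qed.

Lemma E1_inj (z z' : 'cV['F_2]_r) : E1 *m z = E1 *m z' -> z = z'.
Proof. by move/(congr1 (mulmx E1^T)); rewrite !mulmxA E1tE1 !mul1mx. Qed.

Lemma E1_supp (z : 'cV['F_2]_r) (i : 'I_m) : (r <= i)%N -> (E1 *m z) i ord0 = 0.
Proof.
move=> hi; rewrite mxE big1 // => j _; rewrite mxE.
have -> : (i == colL j) = false by apply/negbTE; rewrite neq_ltn /= (leq_trans (ltn_ord j) hi) orbT.
by rewrite mul0r.
Qed.

Lemma supp_E1 (t : 'cV['F_2]_m) : (forall i : 'I_m, (r <= i)%N -> t i ord0 = 0) ->
  t = E1 *m (E1^T *m t).
Proof.
move=> Ht.
have h2 : E2^T *m t = 0.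
  apply/matrixP => l k; rewrite (ord1 k) !mxE.
  under eq_bigr do rewrite [E2^T _ _]mxE [E2 _ _]mxE.
  by rewrite sum_delta_l Ht //= leq_addr.
by rewrite mulmxA -[X in X = _]mul1mx -E1E1_E2E2 mulmxDl -[E2 *m _ *m t]mulmxA h2 mulmx0 addr0.
Qed.


Variables (S : 'M['F_2]_r) (b : 'cV['F_2]_m).
Hypothesis hS : S^T = S.

Definition Mt := Stil m S.
Lemma Mt_sym : Mt^T = Mt.
Proof.
apply/matrixP => i j; rewrite !mxE.
case: insub => [a|]; case: insub => [a'|] //.
by rewrite -{1}hS mxE.
Qed.

Lemma F2_agree (x y : 'F_2) : 1 + x + y = (x == y)%:R.
Proof. by case: (F2cases x) => ->; case: (F2cases y) => ->; rewrite ?F2_11 ?addr0 ?add0r ?eqxx //; apply: val_inj. Qed.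

Lemma fagree_ag u : ((lift2 (fagree b u r))%:R : algC) = (agr r b u)%:R.
Proof.
have -> : fagree b u r = (agr r b u)%:R.
  rewrite /fagree /agr; under eq_bigr do rewrite F2_agree.
  case: (boolP [forall _, _]) => [/forallP H|/forallPn [i Hi]].
    by apply: big1 => i hi; have := implyP (H i) hi; rewrite eq_sym => ->.
  move: Hi; rewrite negb_imply => /andP [hi Hne].
  by rewrite (bigD1 i) //= eq_sym (negbTE Hne) mul0r.
by case: (agr r b u).
Qed.

Definition w := bssc HI piv S b.
Definition cc : algC := (sqrtC 2) ^- r.
Lemma cc_neq0 : cc != 0.
Proof. by rewrite /cc invr_eq0 expf_neq0 // sqrtC_eq0 pnatr_eq0. Qed.

Lemma w_P u : w (P *m u) = cc * 'i ^+ zquad Mt u * sg ((b^T *m u) ord0 ord0) * (agr r b u)%:R.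
Proof.
rewrite /w /bssc.
have -> : invmx (P_I HI piv) *m (P *m u) = u by rewrite mulmxA QiP mul1mx.
by rewrite exprD exprM sqrCi zdot_sg fagree_ag /cc /Mt !mulrA.
Qed.

Lemma P_inj : injective (fun u : 'cV['F_2]_m => P *m u).
Proof. by move=> u v /(congr1 (mulmx Qi)); rewrite !mulmxA QiP !mul1mx. Qed.

Lemma quadf_P x y : quadf w (Eop x y) = 'i ^+ zdot x y *
  \sum_u (w (P *m (u + Qi *m x)))^* * sg ((y^T *m (P *m u)) ord0 ord0) * w (P *m u).
Proof.
rewrite quadf_E (reindex_inj P_inj) /=; congr (_ * _); apply: eq_bigr => u _.
by rewrite mulmxDr [P *m (Qi *m x)]mulmxA PQi mul1mx.
Qed.

Lemma iconj n : ('i ^+ n)^* * 'i ^+ n = 1 :> algC.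
Proof. by rewrite mulrC -normCK normrX normCi !expr1n. Qed.

Lemma yPu (y u : 'cV['F_2]_m) : (y^T *m (P *m u)) ord0 ord0 = (u^T *m (P^T *m y)) ord0 ord0.
Proof.
transitivity ((y^T *m (P *m u))^T ord0 ord0); first by rewrite [RHS]mxE.
by rewrite !trmx_mul trmxK mulmxA.
Qed.

Lemma quadf_nz x y : quadf w (Eop x y) != 0 <->
  (forall i : 'I_m, (r <= i)%N -> (Qi *m x) i ord0 = 0) /\
  (forall i : 'I_m, (i < r)%N -> (Mt *m (Qi *m x) + P^T *m y) i ord0 = 0).
Proof.
set t := Qi *m x.
rewrite quadf_P.
case: (boolP [forall i : 'I_m, (r <= i)%N ==> (t i ord0 == 0)]) => [/forallP Ht|Ht].
  have Hag : forall u, agr r b (u + t) = agr r b u.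
    move=> u; apply: eq_forallb => i; case: (leqP r i) => //= hi.
    by rewrite mxE (eqP (implyP (Ht i) hi)) addr0.
  set g := Mt *m t + P^T *m y.
  set K := (cc^* * cc) * ('i ^+ zquad Mt t)^* * sg ((b^T *m t) ord0 ord0).
  have E : \sum_u (w (P *m (u + t)))^* * sg ((y^T *m (P *m u)) ord0 ord0) * w (P *m u)
         = K * \sum_u (agr r b u)%:R * sg ((u^T *m g) ord0 ord0).
    rewrite mulr_sumr; apply: eq_bigr => u _.
    rewrite !w_P Hag (@ipow_quad _ _ Mt_sym) yPu.
    have -> : (b^T *m (u + t)) ord0 ord0 = (b^T *m u) ord0 ord0 + (b^T *m t) ord0 ord0
      by rewrite mulmxDr mxE.
    have -> : (u^T *m g) ord0 ord0 = (u^T *m Mt *m t) ord0 ord0 + (u^T *m (P^T *m y)) ord0 ord0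
      by rewrite /g mulmxDr mxE mulmxA.
    rewrite !sgD !rmorphM /= !sg_conj rmorph_nat.
    have h1 := iconj (zquad Mt u).
    have h2 := sgK ((b^T *m u) ord0 ord0).
    have h3 : (agr r b u)%:R * (agr r b u)%:R = (agr r b u)%:R :> algC
      by case: (agr r b u); rewrite ?mulr1 ?mulr0.
    by rewrite /K; apply: ring_aux.
  rewrite E; split.
    move=> Hnz; split; first by move=> i hi; apply/eqP; exact: (implyP (Ht i) hi).
    apply/(chsum m r b g); apply: contraNneq Hnz => ->; by rewrite !mulr0.
  move=> [_ Hg]; have := (chsum m r b g).2 Hg => Hs.
  have iz : forall n, ('i ^+ n : algC) != 0 by move=> n; rewrite expf_neq0 // neq0Ci.
  rewrite mulf_neq0 // /K !mulf_neq0 ?sg_neq0 ?cc_neq0 ?conjC_eq0 ?cc_neq0 ?iz //.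
move: Ht => /forallPn [i]; rewrite negb_imply => /andP [hi Hti].
have E : \sum_u (w (P *m (u + t)))^* * sg ((y^T *m (P *m u)) ord0 ord0) * w (P *m u) = 0.
  apply: big1 => u _; rewrite !w_P.
  case: (boolP (agr r b u)) => Hu; last by rewrite !mulr0.
  have -> : agr r b (u + t) = false.
    apply/negbTE; apply/negP; rewrite /agr => /forallP /(_ i); rewrite hi /=.
    move: Hu; rewrite /agr => /forallP /(_ i); rewrite hi /= => /eqP Hu.
    rewrite mxE Hu => /eqP /(congr1 (fun z => z - b i ord0)).
    by rewrite [b i ord0 + _]addrC addrK subrr; apply/eqP.
  by rewrite !mulr0 rmorph0 !mul0r.
rewrite E mulr0 eqxx; split => // [[H _]].
by move: Hti; rewrite H.
Qed.

Lemma E1tMtE1 : E1^T *m Mt *m E1 = S.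
Proof.
apply/matrixP => j j'; rewrite mxE.
under eq_bigr do rewrite [E1 _ _]mxE [(E1^T *m Mt) _ _]mxE.
under eq_bigr do under eq_bigr do rewrite [E1^T _ _]mxE [E1 _ _]mxE.
under eq_bigr do rewrite sum_delta_l.
rewrite sum_delta_r /Mt /Stil mxE /= (@insub_ord _ _ (ltn_ord j)) (@insub_ord _ _ (ltn_ord j')).
by congr (S _ _); apply: val_inj.
Qed.

Lemma E1t_col (g : 'cV['F_2]_m) j : (E1^T *m g) j ord0 = g (colL j) ord0.
Proof.
rewrite mxE; under eq_bigr do rewrite [E1^T _ _]mxE [E1 _ _]mxE.
by rewrite sum_delta_l.
Qed.

Lemma E1t_zero (g : 'cV['F_2]_m) :
  (forall i : 'I_m, (i < r)%N -> g i ord0 = 0) <-> E1^T *m g = 0.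
Proof.
split=> [H|H i hi].
  apply/matrixP => j k; rewrite (ord1 k) E1t_col mxE H //. exact: (ltn_ord j).
have -> : i = colL (Ordinal hi) by apply: val_inj.
by rewrite -E1t_col H mxE.
Qed.

Lemma oppF2mx (n k : nat) (A : 'M['F_2]_(n, k)) : - A = A.
Proof. by apply/matrixP => i j; rewrite mxE F2_opp. Qed.

Lemma main1 x y : quadf w (Eop x y) != 0 <->
  x \in colspace HI /\ exists z : 'cV['F_2]_r, x = HI *m z /\ HI^T *m y = S *m z.
Proof.
rewrite quadf_nz; split.
  move=> [Ht Hg].
  set z := E1^T *m (Qi *m x).
  have hx : x = HI *m z.
    by rewrite /z -PE1 -mulmxA -(@supp_E1 _ Ht) mulmxA PQi mul1mx.
  split; first by rewrite hx; apply/imsetP; exists z.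
  exists z; split => //.
  move/E1t_zero: Hg; rewrite mulmxDr (@supp_E1 _ Ht) -/z !mulmxA E1tMtE1 -mulmxA -HIt.
  by move/eqP; rewrite addr_eq0 oppF2mx => /eqP.
move=> [_ [z [-> Hz]]].
rewrite HI_Qi; split; first by move=> i hi; rewrite E1_supp.
apply/E1t_zero; rewrite mulmxDr !mulmxA E1tMtE1 -HIt Hz.
by apply/eqP; rewrite addr_eq0 oppF2mx.
Qed.

Lemma main2 x y : quadf w (Eop x y) != 0 <->
  x \in colspace HI /\ exists z : 'cV['F_2]_r, x = HI *m z /\
    exists v : 'cV['F_2]_(m - r), y = Htil HI piv *m v + I_I piv *m (S *m z).
Proof.
rewrite main1; split=> [[hx [z [hz Hy]]]|[hx [z [hz Hy]]]]; split=> //; exists z; split=> //.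
  by apply/keyK.
by apply/keyK.
Qed.

Lemma HI_inj0 (z : 'cV['F_2]_r) : 0 = HI *m z -> z = 0.
Proof.
move=> h; apply: E1_inj; rewrite mulmx0 -HI_Qi -h mulmx0 //.
Qed.

Lemma main3 y : quadf w (Eop 0 y) != 0 <-> y \in colspace (Htil HI piv).
Proof.
rewrite main1; split.
  move=> [_ [z [hz Hy]]]; move: Hy; rewrite (@HI_inj0 _ hz) mulmx0 => /keyK [v ->].
  by rewrite mulmx0 addr0; apply/imsetP; exists v.
move=> /imsetP [v _ ->]; split; first by apply/imsetP; exists 0; rewrite ?mulmx0.
exists 0; split; first by rewrite mulmx0.
by rewrite mulmx0; apply/keyK; exists v; rewrite mulmx0 addr0.
Qed.

Lemma main4 : colspace (Htil HI piv) = perp (colspace HI).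
Proof.
apply/setP => y.
have -> : (y \in colspace (Htil HI piv)) = (HI^T *m y == 0).
  apply/idP/eqP.
    by move=> /imsetP [v _ ->]; rewrite mulmxA HIt_Htil mul0mx.
  by move=> /keyK [v ->]; apply/imsetP; exists v => //; rewrite mulmx0 addr0.
have key : forall z : 'cV['F_2]_r, (y^T *m (HI *m z)) ord0 ord0 = ((HI^T *m y)^T *m z) ord0 ord0.
  by move=> z; rewrite trmx_mul trmxK mulmxA.
rewrite inE; apply/eqP/forall_inP.
  move=> H0 h /imsetP [z _ ->]; by rewrite key H0 trmx0 mul0mx mxE.
move=> H; apply/matrixP => j k; rewrite (ord1 k) [RHS]mxE.
have hin : HI *m delta_mx j ord0 \in colspace HI by apply/imsetP; exists (delta_mx j ord0).
have := H _ hin; rewrite key uTg_sum => /eqP <-.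
rewrite (bigD1 j) //= big1 ?addr0; first by rewrite [delta_mx _ _ _ _]mxE !eqxx mulr1.
by move=> k' /negbTE hk; rewrite [delta_mx _ _ _ _]mxE hk mulr0.
Qed.

End LinAlg.

Theorem mainTheorem6 (m r : nat) (hm : (1 <= m)%N)
    (H : {set 'cV['F_2]_m}) (HI : 'M['F_2]_(m, r)) (piv : 'I_r -> 'I_m)
    (hech : col_reduced_echelon HI piv) (hH : H = colspace HI)
    (S : 'M['F_2]_r) (hS : S^T = S) (b : 'cV['F_2]_m) :
  let w := bssc HI piv S b in
  (forall x y : 'cV['F_2]_m,
     (quadf w (Eop x y) != 0 <->
        x \in H /\ exists z : 'cV['F_2]_r, x = HI *m z /\ HI^T *m y = S *m z)
     /\
     (quadf w (Eop x y) != 0 <->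
        x \in H /\ exists z : 'cV['F_2]_r, x = HI *m z /\
          exists v : 'cV['F_2]_(m - r),
            y = Htil HI piv *m v + I_I piv *m (S *m z)))
  /\
  (forall y : 'cV['F_2]_m,
     quadf w (Eop 0 y) != 0 <-> y \in colspace (Htil HI piv))
  /\ colspace (Htil HI piv) = perp H.
Proof.
case: hech => _ hpiv _; move=> w; subst H.
split; first by move=> x y; split; [exact: (@main1 m r HI piv hpiv S b hS x y) | exact: (@main2 m r HI piv hpiv S b hS x y)].
split; first by move=> y; exact: (@main3 m r HI piv hpiv S b hS y).
exact: (@main4 m r HI piv hpiv).
Qed.
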